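(* Let $\ell\in\mathcal{D}^-[0,\infty)$, $r\in\mathcal{D}^+[0,\infty)$ with $\ell\le r$. Given any $\psi\in\mathcal{D}[0,\infty)$, there exists at most one $\phi\in\mathcal{D}[0,\infty)$ such that $(\phi,\phi-\psi)$ solves the ESP on $[\ell(\cdot),r(\cdot)]$ for $\psi$.
   Context: $\mathcal{D}[0,\infty)$ denotes the càdlàg functions $[0,\infty)\to(-\infty,\infty)$; $\mathcal{D}^-[0,\infty)$ (resp. $\mathcal{D}^+[0,\infty)$) denotes càdlàg functions with values in $[-\infty,\infty)$ (resp. $(-\infty,\infty]$). ESP: $(\phi,\eta)\in\mathcal{D}[0,\infty)^2$ solves the ESP on $[\ell(\cdot),r(\cdot)]$ for $\psi$ if (1) $\phi(t)=\psi(t)+\eta(t)\in[\ell(t),r(t)]$ for all $t\ge0$; (2) for all $0\le s\le t$: $\eta(t)-\eta(s)\ge0$ if $\phi(u)<r(u)$ for all $u\in(s,t]$, and $\eta(t)-\eta(s)\le0$ if $\phi(u)>\ell(u)$ for all $u\in(s,t]$; (3) for all $t\ge0$: $\eta(t)-\eta(t-)\ge0$ if $\phi(t)<r(t)$, and $\eta(t)-\eta(t-)\le0$ if $\phi(t)>\ell(t)$, where $\eta(0-)=0$. *)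

(* Defs.v *)
From HB Require Import structures.
From mathcomp Require Import all_boot all_order all_algebra.
From mathcomp Require Import all_classical all_reals all_analysis.
Set Implicit Arguments. Unset Strict Implicit. Unset Printing Implicit Defensive.
Import Order.TTheory GRing.Theory Num.Theory numFieldNormedType.Exports.
Local Open Scope classical_set_scope.
Local Open Scope ring_scope.

(* A function f : R -> T (only its restriction to [0,oo) matters) is cadlag on
   [0,oo): right-continuous at every t >= 0 and has a left limit (in T) at
   every t > 0. For T = R this is D[0,oo); for T = \bar R it is the extended
   valued version used for D^- and D^+. *)
Definition cadlag {R : realType} {T : topologicalType} (f : R -> T) : Prop :=
  (forall t : R, 0 <= t -> f x @[x --> at_right t] --> f t) /\
  (forall t : R, 0 < t -> exists l : T, f x @[x --> at_left t] --> l).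

Definition cadlag_minus {R : realType} (f : R -> \bar R) : Prop :=
  cadlag f /\ (forall t : R, 0 <= t -> f t != +oo%E).

Definition cadlag_plus {R : realType} (f : R -> \bar R) : Prop :=
  cadlag f /\ (forall t : R, 0 <= t -> f t != -oo%E).

(* left limit eta(t-) with the convention eta(0-) = 0 *)
Definition left_lim {R : realType} (eta : R -> R) (t : R) : R :=
  if (0 < t) then lim (eta x @[x --> at_left t]) else 0.

Definition ESP {R : realType} (ell r : R -> \bar R) (psi phi eta : R -> R) : Prop :=
  cadlag phi /\ cadlag eta /\
  (forall t : R, 0 <= t ->
     phi t = psi t + eta t /\ (ell t <= (phi t)%:E)%E /\ ((phi t)%:E <= r t)%E) /\
  (forall s t : R, 0 <= s -> s <= t ->
     ((forall u : R, s < u <= t -> ((phi u)%:E < r u)%E) -> 0 <= eta t - eta s) /\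
     ((forall u : R, s < u <= t -> (ell u < (phi u)%:E)%E) -> eta t - eta s <= 0)) /\
  (forall t : R, 0 <= t ->
     (((phi t)%:E < r t)%E -> 0 <= eta t - left_lim eta t) /\
     ((ell t < (phi t)%:E)%E -> eta t - left_lim eta t <= 0)).

(* Main.v *)
Require Import Defs.
From HB Require Import structures.
From mathcomp Require Import all_boot all_order all_algebra.
From mathcomp Require Import all_classical all_reals all_analysis.
Import Order.TTheory GRing.Theory Num.Theory numFieldNormedType.Exports.
Local Open Scope ring_scope.
From mathcomp Require Import lra.

Lemma key {R : realType} {ell r : R -> \bar R} {psi : R -> R} {phi1 phi2 : R -> R} :
    ESP ell r psi phi1 (fun t => phi1 t - psi t) ->
    ESP ell r psi phi2 (fun t => phi2 t - psi t) ->
    forall t : R, 0 <= t -> phi1 t <= phi2 t.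
Proof.
move=> [_ [ce1 [c11 [c12 c13]]]] [_ [ce2 [c21 [c22 c23]]]] t t0.
rewrite leNgt; apply/negP => Dt.
have H1 u : 0 <= u -> phi2 u < phi1 u ->
    (ell u < (phi1 u)%:E)%E /\ ((phi2 u)%:E < r u)%E.
  move=> u0 hu; have [_ [l2 r2]] := c21 u u0; have [_ [l1 r1]] := c11 u u0.
  split; [apply: (le_lt_trans l2) | apply: (lt_le_trans _ r1)]; by rewrite lte_fin.
pose A := [set u : R | (0 <= u <= t) /\ phi1 u <= phi2 u]%classic.
have A0 : A 0.
  split; first by rewrite lexx t0.
  rewrite leNgt; apply/negP => h.
  have [l _] := H1 0 (lexx 0) h.
  have [_ a1] := c13 0 (lexx 0); have [a2 _] := c23 0 (lexx 0).
  have {a1} := a1 l. have {a2} := a2 (proj2 (H1 0 (lexx 0) h)).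
  rewrite /left_lim ltxx; lra.
have hs : has_sup A.
  split; first by exists 0.
  by exists t => u [/andP[_ ?] _].
pose s := sup A.
have st : s <= t by apply: ge_sup; [exists 0 | move=> u [/andP[_ ?] _]].
have s0 : 0 <= s by apply: sup_upper_bound.
have inA u : 0 <= u <= t -> phi1 u <= phi2 u -> u <= s.
  by move=> ? ?; apply: sup_upper_bound.
case: (lerP (phi1 s) (phi2 s)) => Ds.
- have ts : s < t by rewrite lt_neqAle st andbT; apply/eqP => est; move: Dt; rewrite -est ltNge Ds.
  have pos u : s < u <= t -> phi2 u < phi1 u.
    move=> /andP[su ut]; rewrite ltNge; apply/negP => h.
    have := inA u; rewrite ut (le_trans s0 (ltW su)) => /(_ isT h); rewrite leNgt su.
    done.
  have [_ a1] := c12 s t s0 (ltW ts).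
  have [a2 _] := c22 s t s0 (ltW ts).
  have {a1} := a1 (fun u hu => proj1 (H1 u (le_trans s0 (ltW (proj1 (andP hu)))) (pos u hu))).
  have {a2} := a2 (fun u hu => proj2 (H1 u (le_trans s0 (ltW (proj1 (andP hu)))) (pos u hu))).
  lra.
- have sp : 0 < s.
    rewrite lt_neqAle s0 andbT; apply/eqP => es.
    by move: Ds; rewrite -es ltNge (proj2 A0).
  have [_ a1] := c13 s s0; have [a2 _] := c23 s s0.
  have {a1} := a1 (proj1 (H1 s s0 Ds)). have {a2} := a2 (proj2 (H1 s s0 Ds)).
  have [l1 hl1] := ce1.2 s sp; have [l2 hl2] := ce2.2 s sp.
  rewrite /left_lim sp (cvg_lim _ hl1) // (cvg_lim _ hl2) //.
  suff : l1 - l2 <= 0 by lra.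
  rewrite leNgt; apply/negP => hl.
  have hc := @cvgB _ _ _ _ (at_left_proper_filter s) _ _ _ _ hl1 hl2.
  have := @cvgr_gt _ _ _ (at_left_proper_filter s) _ _ hc _ hl.
  move=> /nbhs_ballP[e e0 He].
  have [u Au hu] := sup_adherent e0 hs.
  have us : u <= s by apply: sup_upper_bound.
  have us' : u < s.
    rewrite lt_neqAle us andbT; apply/eqP => eu.
    by move: Ds; rewrite -eu ltNge (proj2 Au).
  have : ball s e u.
    rewrite /ball /= ger0_norm; [|lra]. rewrite /s; lra.
  move=> /He /(_ us') /=.
  move=> h; have h2 : 0 < (phi1 u - psi u) - (phi2 u - psi u) by exact: h.
  move: (proj2 Au) h2; lra.
Qed.

Theorem proposition2p8 (R : realType) (ell r : R -> \bar R) (psi : R -> R) :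
  cadlag_minus ell -> cadlag_plus r ->
  (forall t : R, 0 <= t -> (ell t <= r t)%E) ->
  cadlag psi ->
  forall phi1 phi2 : R -> R,
    cadlag phi1 -> ESP ell r psi phi1 (fun t => phi1 t - psi t) ->
    cadlag phi2 -> ESP ell r psi phi2 (fun t => phi2 t - psi t) ->
    forall t : R, 0 <= t -> phi1 t = phi2 t.
Proof.
move=> _ _ _ _ phi1 phi2 _ E1 _ E2 t t0.
by apply/eqP; rewrite eq_le (key E1 E2 t t0) (key E2 E1 t t0).
Qed.
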